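(* Let $C$ be a conformal algebra and let $f(a_1,\dots,a_n)=\sum_{\sigma\in S_n} t_\sigma(a_{1\sigma},\dots,a_{n\sigma})$ be a homogeneous multilinear non-associative polynomial over $\Bbbk$. If the coefficient algebra $\operatorname{Coeff} C$ satisfies the identity $f=0$, then $C$, regarded as a pseudoalgebra, satisfies the pseudo-identity $f^*=0$, i.e. $$\sum_{\sigma\in S_n}(\sigma\otimes_H \mathrm{id}_C)\, t^*_\sigma(a_{1\sigma},\dots,a_{n\sigma})=0 \quad\text{in } H^{\otimes n}\otimes_H C$$ for all $a_1,\dots,a_n\in C$.
   Context: Let $\Bbbk$ be a field of characteristic $0$ and $H=\Bbbk[D]$ the polynomial algebra, regarded as a Hopf algebra with $\Delta(D)=D\otimes1+1\otimes D$, $\varepsilon(D)=0$, $S(D)=-D$. Sweedler notation: $\Delta(f)=f_{(1)}\otimes f_{(2)}$; iterated coproduct $\Delta^{(1)}=\mathrm{id}_H$, $\Delta^{(k+1)}=(\mathrm{id}_H\otimes\Delta^{(k)})\Delta$. $H$ acts on $H^{\otimes n}$ from the right by $(f_1\otimes\cdots\otimes f_n)h=f_1h_{(1)}\otimes\cdots\otimes f_nh_{(n)}$, and for a left $H$-module $M$ the space $H^{\otimes n}\otimes_H M$ is formed with respect to this action (so $H\otimes_H M\cong M$). A conformal algebra is a unital left $H$-module $C$ with $\Bbbk$-bilinear operations $a_{(n)}b$, $n\ge0$, such that for all $a,b\in C$: $a_{(n)}b=0$ for all sufficiently large $n$; $(Da)_{(n)}b=-n\,a_{(n-1)}b$ and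 $a_{(n)}(Db)=D(a_{(n)}b)+n\,a_{(n-1)}b$. Pseudoproduct: $a*b=\sum_{s\ge0}\frac{(-D)^s}{s!}\otimes1\otimes_H(a_{(s)}b)\in (H\otimes H)\otimes_H C$. Expanded pseudoproduct: for $F\in H^{\otimes n}$, $G\in H^{\otimes m}$, $a,b\in C$ with $a*b=\sum_i f_i\otimes g_i\otimes_H c_i$, set $(F\otimes_H a)*(G\otimes_H b)=\sum_i F\Delta^{(n)}(f_i)\otimes G\Delta^{(m)}(g_i)\otimes_H c_i\in H^{\otimes(n+m)}\otimes_H C$ (extended linearly). Coefficient algebra: $\operatorname{Coeff}C=\Bbbk[t,t^{-1}]\otimes_H C$, where $\Bbbk[t,t^{-1}]$ is a right $H$-module via $t^nD=-nt^{n-1}$; writing $a(n)=t^n\otimes_H a$, the (non-associative in general) multiplication is $a(n)b(m)=\sum_{s\ge0}\binom{n}{s}(a_{(s)}b)(n+m-s)$. Pseudo-form of an identity: write a homogeneous multilinear polynomial as $f(a_1,\dots,a_n)=\sum_{\sigma\in S_n}t_\sigma(a_{1\sigma},\dots,a_{n\sigma})$, where $i\sigma$ is the image of $i$ under $\sigma$ and each $t_\sigma(b_1,\dots,b_n)$ is a linear combination of bracketings of the word $b_1b_2\cdots b_n$ (letters in this order). For a bracketing $t$, $t^*(b_1,\dots,b_n)\in H^{\otimes n}\otimes_H C$ is obtained by replacing every product by the expanded pseudoproduct, each $b_i\in C$ being regarded as $1\otimes_H b_i\in H\otimes_H C$; extend linearly. For $\sigma\in S_n$, $\sigma\otimes_H\mathrm{id}_C$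 denotes the map on $H^{\otimes n}\otimes_H C$ induced by the permutation of tensor factors of $H^{\otimes n}$ sending the $k$-th factor to position $k\sigma$ (so in $(\sigma\otimes_H\mathrm{id}_C)t^*(a_{1\sigma},\dots,a_{n\sigma})$ the factor attached to the argument $a_j$ stands in position $j$). Then $f^*(a_1,\dots,a_n)=\sum_{\sigma}(\sigma\otimes_H\mathrm{id}_C)t^*_\sigma(a_{1\sigma},\dots,a_{n\sigma})$. *)

(* Defs.v *)
From HB Require Import structures.
From mathcomp Require Import all_boot all_order all_algebra all_fingroup.
From mathcomp Require Import mpoly.
Set Implicit Arguments. Unset Strict Implicit. Unset Printing Implicit Defensive.
Import Order.TTheory GRing.Theory Num.Theory.
Local Open Scope ring_scope.

(* H = k[D].  A left H-module is a k-vector space C with an endomorphism D;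
   h . c := sum_i h_i D^i c.                                            *)
Definition hact (F : fieldType) (C : lmodType F) (D : C -> C)
    (h : {poly F}) (c : C) : C :=
  \sum_(i < size h) h`_i *: iter i D c.

(* Conformal algebra structure on (C, D) with n-products prod s a b = a_(s) b.
   Locality ("a_(s) b = 0 for all sufficiently large s") is witnessed by a
   bound function N (any conformal algebra admits one, by choice).      *)
Definition is_conformal (F : fieldType) (C : lmodType F) (D : C -> C)
    (prod : nat -> C -> C -> C) (N : C -> C -> nat) : Prop :=
  (forall (k : F) x y, D (k *: x + y) = k *: D x + D y) /\
  (forall s (k : F) x y z, prod s (k *: x + y) z = k *: prod s x z + prod s y z) /\
  (forall s (k : F) x y z, prod s z (k *: x + y) = k *: prod s z x + prod s z y) /\
  (forall a b s, (N a b <= s)%N -> prod s a b = 0) /\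
  (forall s a b, prod s (D a) b = - (s%:R *: prod s.-1 a b)) /\
  (forall s a b, prod s a (D b) = D (prod s a b) + s%:R *: prod s.-1 a b).

(* Bracketings: binary trees; the letters b_1 ... b_k of a word are placed
   on the leaves from left to right.                                   *)
Inductive brk : Type := BLeaf | BNode of brk & brk.

Fixpoint leaves (t : brk) : nat :=
  match t with BLeaf => 1%N | BNode l r => (leaves l + leaves r)%N end.

Fixpoint brk_eval (X : Type) (mul : X -> X -> X) (t : brk) (g : nat -> X)
    (o : nat) : X :=
  match t with
  | BLeaf => g o
  | BNode l r => mul (brk_eval mul l g o) (brk_eval mul r g (o + leaves l))
  end.

(* A homogeneous multilinear polynomial of degree n is given by the family
   (t_sigma)_{sigma in S_n}, each t_sigma a linear combination of
   bracketings with n leaves:  f(a_1..a_n) = sum_sigma t_sigma(a_{1sigma},..).*)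
Definition ml_poly (F : fieldType) (n : nat) := 'S_n -> seq (F * brk).

Definition ml_poly_wf (F : fieldType) n (P : ml_poly F n) : Prop :=
  forall s : 'S_n, all (fun p => leaves p.2 == n) (P s).

(* arguments b_i = a_{i sigma} (0-based), as a nat-indexed family *)
Definition perm_args (X : Type) (x0 : X) n (s : 'S_n) (a : 'I_n -> X) : nat -> X :=
  fun i => if insub i is Some j then a (s j) else x0.

(* Coefficient algebra Coeff C = k[t,t^-1] (x)_H C.
   An element is represented by a formal sum  sum_j a_j(n_j)  given as a
   list of pairs (n_j, a_j), a(n) = t^n (x)_H a.                       *)
Definition coeff_rep (F : fieldType) (C : lmodType F) := seq (int * C).

Definition binZ (F : fieldType) (n : int) (s : nat) : F :=
  (\prod_(j < s) (n - (j : nat)%:Z)%:~R) / (s`!)%:R.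

(* a(n) b(m) = sum_s binom(n,s) (a_(s) b)(n+m-s), extended bilinearly *)
Definition coeff_mul (F : fieldType) (C : lmodType F)
    (prod : nat -> C -> C -> C) (N : C -> C -> nat)
    (x y : coeff_rep C) : coeff_rep C :=
  flatten [seq flatten [seq
     [seq ((p.1 + q.1 - (s : nat)%:Z)%R, binZ F p.1 s *: prod s p.2 q.2)
        | s <- iota 0 (N p.2 q.2)] | q <- y] | p <- x].

Definition coeff_scale (F : fieldType) (C : lmodType F) (k : F)
    (x : coeff_rep C) : coeff_rep C := [seq (p.1, k *: p.2) | p <- x].

(* A formal sum represents 0 in k[t,t^-1] (x)_H C iff it is killed by every
   H-balanced k-bilinear map k[t,t^-1] x C -> W (universal property of the
   tensor product).  Such a map is determined by gam n c := beta(t^n, c),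
   linear in c, and H-balancedness is beta(t^n D, c) = beta(t^n, D c), i.e.
   gam n (D c) = -n gam (n-1) c since t^n D = -n t^(n-1).              *)
Definition coeff_zero (F : fieldType) (C : lmodType F) (D : C -> C)
    (x : coeff_rep C) : Prop :=
  forall (W : lmodType F) (gam : int -> C -> W),
    (forall n (k : F) c c', gam n (k *: c + c') = k *: gam n c + gam n c') ->
    (forall n c, gam n (D c) = - (n%:~R *: gam (n - 1)%R c)) ->
    \sum_(p <- x) gam p.1 p.2 = 0.

Definition coeff_eval (F : fieldType) (C : lmodType F)
    (prod : nat -> C -> C -> C) (N : C -> C -> nat) n (P : ml_poly F n)
    (x : 'I_n -> coeff_rep C) : coeff_rep C :=
  flatten [seq flatten [seq coeff_scale p.1
        (brk_eval (coeff_mul prod N) p.2 (perm_args [::] s x) 0)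
      | p <- P s] | s <- enum [set: 'S_n]].

Definition coeff_satisfies (F : fieldType) (C : lmodType F) (D : C -> C)
    (prod : nat -> C -> C -> C) (N : C -> C -> nat) n (P : ml_poly F n) : Prop :=
  forall x : 'I_n -> coeff_rep C, coeff_zero D (coeff_eval prod N P x).

(* H^{(x) n} = k[D_1,...,D_n] = {mpoly F[n]} (the i-th tensor factor is the
   variable 'X_i).  Elements of H^{(x) n} (x)_H C are represented by formal
   sums sum_j F_j (x)_H c_j, i.e. lists of pairs (F_j, c_j).                                 *)
Definition pseudo_rep (F : fieldType) (C : lmodType F) (n : nat) :=
  seq ({mpoly F[n]} * C).

Definition Delta (F : fieldType) (n : nat) (h : {poly F}) : {mpoly F[n]} :=
  (map_poly (fun c => c%:MP) h).[\sum_(i < n) 'X_i].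

Definition pseudo_zero (F : fieldType) (C : lmodType F) (D : C -> C) n
    (x : pseudo_rep C n) : Prop :=
  forall (W : lmodType F) (beta : {mpoly F[n]} -> C -> W),
    (forall (k : F) G G' c, beta (k *: G + G') c = k *: beta G c + beta G' c) ->
    (forall (k : F) G c c', beta G (k *: c + c') = k *: beta G c + beta G c') ->
    (forall G (h : {poly F}) c, beta (G * Delta n h) c = beta G (hact D h c)) ->
    \sum_(p <- x) beta p.1 p.2 = 0.

(* Sub-block sum D_{o+1} + ... + D_{o+k} (0-based variables o .. o+k-1):
   the image of Delta^{(k)}(D) when H^{(x) k} is placed in the tensor
   positions o+1 .. o+k of H^{(x) n}.                                   *)
Definition block_sum (F : fieldType) n (o k : nat) : {mpoly F[n]} :=
  \sum_(i < n | (o <= i < o + k)%N) 'X_i.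

(* Expanded pseudoproduct of x (occupying the tensor positions o..o+k-1)
   and y (occupying the next positions):
   (G (x)_H a) * (G' (x)_H b)
     = sum_s G Delta^{(k)}((-D)^s/s!) (x) G' (x)_H (a_(s) b).           *)
Definition pseudo_mul (F : fieldType) (C : lmodType F)
    (prod : nat -> C -> C -> C) (N : C -> C -> nat) n (o k : nat)
    (x y : pseudo_rep C n) : pseudo_rep C n :=
  flatten [seq flatten [seq
     [seq (p.1 * (((s`!)%:R : F)^-1 *: (- block_sum F n o k) ^+ s) * q.1,
           prod s p.2 q.2)
        | s <- iota 0 (N p.2 q.2)] | q <- y] | p <- x].

(* t^*(b_{o+1}, ..., b_{o+leaves t}), each b_i seen as 1 (x)_H b_i *)
Fixpoint pseudo_eval (F : fieldType) (C : lmodType F)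
    (prod : nat -> C -> C -> C) (N : C -> C -> nat) n (t : brk)
    (g : nat -> C) (o : nat) : pseudo_rep C n :=
  match t with
  | BLeaf => [:: (1, g o)]
  | BNode l r =>
      pseudo_mul prod N o (leaves l)
        (pseudo_eval prod N n l g o) (pseudo_eval prod N n r g (o + leaves l))
  end.

(* sigma (x)_H id_C: the k-th tensor factor goes to position k sigma, i.e.
   the variable 'X_k is renamed 'X_(sigma k). *)
Definition perm_factors (F : fieldType) (C : lmodType F) n (s : 'S_n)
    (x : pseudo_rep C n) : pseudo_rep C n :=
  [seq (p.1 \mPo [tuple 'X_(s i) | i < n], p.2) | p <- x].

Definition pseudo_poly_eval (F : fieldType) (C : lmodType F)
    (prod : nat -> C -> C -> C) (N : C -> C -> nat) n (P : ml_poly F n)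
    (a : 'I_n -> C) : pseudo_rep C n :=
  flatten [seq flatten [seq
       [seq (p.1 *: q.1, q.2)
          | q <- perm_factors s (pseudo_eval prod N n p.2 (perm_args 0 s a) 0)]
      | p <- P s] | s <- enum [set: 'S_n]].

(* Main.v *)
Require Import Defs.
From HB Require Import structures.
From mathcomp Require Import all_boot all_order all_algebra all_fingroup.
From mathcomp Require Import mpoly.
From mathcomp Require Import ring zify.
Set Implicit Arguments. Unset Strict Implicit. Unset Printing Implicit Defensive.
Import Order.TTheory GRing.Theory Num.Theory.
Local Open Scope ring_scope.

Section Lam.
Variables (F : fieldType) (n : nat).
Implicit Types (G Q : {mpoly F[n]}).

Definition lam (V : lmodType F) (phi : 'X_{1..n} -> V) G : V :=
  \sum_(e <- msupp G) G@_e *: phi e.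

Lemma lamE (V : lmodType F) (phi : 'X_{1..n} -> V) G (s : seq 'X_{1..n}) :
  uniq s -> {subset msupp G <= s} -> lam phi G = \sum_(e <- s) G@_e *: phi e.
Proof.
move=> us sub; rewrite (bigID (fun e => e \in msupp G)) /=.
rewrite [X in _ + X]big1 ?addr0; last first.
  by move=> e /memN_msupp_eq0 ->; rewrite scale0r.
rewrite -big_filter /lam; apply: perm_big.
apply: uniq_perm; rewrite ?filter_uniq ?msupp_uniq //.
by move=> e; rewrite mem_filter; case: (boolP (e \in msupp G)) => // /sub ->.
Qed.

Lemma lam_lin (V : lmodType F) (phi : 'X_{1..n} -> V) (a : F) G Q :
  lam phi (a *: G + Q) = a *: lam phi G + lam phi Q.
Proof.
set s := undup (msupp (a *: G + Q) ++ msupp G ++ msupp Q).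
have us : uniq s by apply: undup_uniq.
have sub : forall H : {mpoly F[n]}, {subset msupp H <= msupp (a *: G + Q) ++ msupp G ++ msupp Q} ->
  {subset msupp H <= s} by move=> H h e /h; rewrite mem_undup.
rewrite (lamE _ us) ?(lamE (G := G) _ us) ?(lamE (G := Q) _ us); first last.
- by apply: sub => e; rewrite !mem_cat => ->; rewrite ?orbT.
- by apply: sub => e; rewrite !mem_cat => ->; rewrite ?orbT.
- by apply: sub => e; rewrite !mem_cat => ->; rewrite ?orbT.
rewrite scaler_sumr -big_split /=; apply: eq_bigr => e _.
by rewrite mcoeffD mcoeffZ scalerDl scalerA.
Qed.

Lemma lam0 (V : lmodType F) (phi : 'X_{1..n} -> V) : lam phi 0 = 0.
Proof. by rewrite /lam msupp0 big_nil. Qed.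

Lemma lamD (V : lmodType F) (phi : 'X_{1..n} -> V) G Q :
  lam phi (G + Q) = lam phi G + lam phi Q.
Proof. by rewrite -{1}[G]scale1r lam_lin scale1r. Qed.

Lemma lamZ (V : lmodType F) (phi : 'X_{1..n} -> V) a G :
  lam phi (a *: G) = a *: lam phi G.
Proof. by rewrite -[a *: G]addr0 lam_lin lam0 addr0. Qed.

Lemma lamN (V : lmodType F) (phi : 'X_{1..n} -> V) G :
  lam phi (- G) = - lam phi G.
Proof. by rewrite -[- G]scaleN1r lamZ scaleN1r. Qed.

Lemma lam_sum (V : lmodType F) (phi : 'X_{1..n} -> V) (I : Type) (r : seq I) (P : pred I) (f : I -> {mpoly F[n]}) :
  lam phi (\sum_(i <- r | P i) f i) = \sum_(i <- r | P i) lam phi (f i).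
Proof.
elim: r => [|x r IH]; first by rewrite !big_nil lam0.
by rewrite !big_cons; case: (P x); rewrite ?lamD IH.
Qed.

Lemma lamX (V : lmodType F) (phi : 'X_{1..n} -> V) e : lam phi 'X_[e] = phi e.
Proof. by rewrite /lam msuppX big_seq1 mcoeffX eqxx scale1r. Qed.

Lemma lam1 (V : lmodType F) (phi : 'X_{1..n} -> V) : lam phi 1 = phi 0%MM.
Proof. by rewrite -mpolyX0 lamX. Qed.

Lemma eq_lam (V : lmodType F) (phi psi : 'X_{1..n} -> V) G :
  {in msupp G, phi =1 psi} -> lam phi G = lam psi G.
Proof. by move=> h; apply: eq_big_seq => e /h ->. Qed.

Lemma lam_phi_lin (V : lmodType F) (phi psi : 'X_{1..n} -> V) a G :
  lam (fun e => a *: phi e + psi e) G = a *: lam phi G + lam psi G.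
Proof.
rewrite /lam scaler_sumr -big_split; apply: eq_bigr => e _ /=.
by rewrite scalerDr !scalerA mulrC.
Qed.

Lemma lam_phi_sum (V : lmodType F) (I : Type) (r : seq I) (P : pred I) (phi : I -> 'X_{1..n} -> V) G :
  lam (fun e => \sum_(i <- r | P i) phi i e) G = \sum_(i <- r | P i) lam (phi i) G.
Proof.
rewrite /lam exchange_big /=; apply: eq_bigr => e _.
by rewrite scaler_sumr.
Qed.

Lemma lam_map (V V' : lmodType F) (f : V -> V')
  (flin : forall a x y, f (a *: x + y) = a *: f x + f y)
  (phi : 'X_{1..n} -> V) G : f (lam phi G) = lam (fun e => f (phi e)) G.
Proof.
have f0 : f 0 = 0.
  have := flin 1 0 0; rewrite !scale1r addr0 => h.
  by have := congr1 (fun v => v - f 0) h; rewrite subrr addrK => <-.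
rewrite /lam; elim: (msupp G) => [|x r IH]; first by rewrite !big_nil.
by rewrite !big_cons flin IH.
Qed.

Lemma lam_mul (V : lmodType F) (phi : 'X_{1..n} -> V) G Q :
  lam phi (G * Q) = lam (fun e => lam (fun f => phi (e + f)%MM) Q) G.
Proof.
rewrite mpolyME (@lam_sum V phi _ (allpairs pair (msupp G) (msupp Q)) xpredT) big_allpairs.
rewrite [RHS]/lam; apply: eq_bigr => e _; rewrite [in RHS]/lam scaler_sumr.
apply: eq_bigr => f _; by rewrite lamZ lamX scalerA.
Qed.

Lemma lam_mulX (V : lmodType F) (phi : 'X_{1..n} -> V) G i :
  lam phi (G * 'X_i) = lam (fun e => phi (e + U_(i))%MM) G.
Proof. by rewrite lam_mul; apply: eq_lam => e _; rewrite lamX. Qed.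

End Lam.

Lemma lam_phiZ (F : fieldType) n (V : lmodType F) (phi : 'X_{1..n} -> V) (a : F) (G : {mpoly F[n]}) :
  lam (fun e => a *: phi e) G = a *: lam phi G.
Proof.
by rewrite /lam scaler_sumr; apply: eq_bigr => e _; rewrite !scalerA mulrC.
Qed.

Lemma lin_sum (F : fieldType) (V V' : lmodType F) (f : V -> V')
  (flin : forall a x y, f (a *: x + y) = a *: f x + f y)
  (I : Type) (r : seq I) (P : pred I) (g : I -> V) :
  f (\sum_(i <- r | P i) g i) = \sum_(i <- r | P i) f (g i).
Proof.
have f0 : f 0 = 0.
  have := flin 1 0 0; rewrite !scale1r addr0 => h.
  by have := congr1 (fun v => v - f 0) h; rewrite subrr addrK => <-.
elim: r => [|x r IH]; first by rewrite !big_nil.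
rewrite !big_cons; case: (P x); last by [].
by rewrite -{1}[g x]scale1r flin scale1r IH.
Qed.

Section Rho.
Variables (F : fieldType) (n : nat).
Implicit Types (G Q : {mpoly F[n]}) (m : 'I_n -> int) (e f : 'X_{1..n}).

Definition ff (a : int) (k : nat) : F := \prod_(j < k) (j%:R - a%:~R).
Definition rho m e : F := \prod_(i < n) ff (m i) (e i).

Lemma ffS a k : ff a k.+1 = ff a k * (k%:R - a%:~R).
Proof. by rewrite /ff big_ord_recr. Qed.

Lemma ff0 a : ff a 0 = 1.
Proof. by rewrite /ff big_ord0. Qed.

Lemma rho0 m : rho m 0%MM = 1.
Proof. by rewrite /rho big1 // => i _; rewrite mnm0E ff0. Qed.

Lemma rhoU m e i : rho m (e + U_(i))%MM = rho m e * ((e i)%:R - (m i)%:~R).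
Proof.
rewrite /rho (bigD1 i) //= [X in _ = X * _](bigD1 i) //= mnmDE mnm1E eqxx addn1 ffS.
rewrite -!mulrA; congr (_ * _); rewrite mulrC; congr (_ * _).
by apply: eq_bigr => j ji; rewrite mnmDE mnm1E eq_sym (negbTE ji) addn0.
Qed.

Lemma rhoD m e f : (forall i, (e i == 0%N) || (f i == 0%N)) ->
  rho m (e + f)%MM = rho m e * rho m f.
Proof.
move=> h; rewrite /rho -big_split; apply: eq_bigr => i _ /=; rewrite mnmDE.
by case/orP: (h i) => /eqP ->; rewrite ff0 ?mulr1 ?mul1r ?addn0.
Qed.

Lemma sum_rhoU m e (A : pred 'I_n) :
  \sum_(i | A i) rho m (e + U_(i))%MM =
  rho m e * \sum_(i | A i) ((e i)%:R - (m i)%:~R).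
Proof. by rewrite mulr_sumr; apply: eq_bigr => i _; rewrite rhoU. Qed.

Definition supp_in (o k : nat) G :=
  forall e, e \in msupp G -> forall i : 'I_n, (e i != 0)%N -> (o <= i < o + k)%N.

Definition Mb m (o k : nat) : int := \sum_(i < n | (o <= i < o + k)%N) m i.

Lemma supp_in0 o k : supp_in o k 0.
Proof. by move=> e; rewrite msupp0. Qed.

Lemma supp_in1 o k : supp_in o k 1.
Proof. by move=> e; rewrite msupp1 inE => /eqP -> i; rewrite mnm0E. Qed.

Lemma supp_inD o k G Q : supp_in o k G -> supp_in o k Q -> supp_in o k (G + Q).
Proof. by move=> hG hQ e /msuppD_le; rewrite mem_cat => /orP [/hG|/hQ]. Qed.

Lemma supp_inZ o k a G : supp_in o k G -> supp_in o k (a *: G).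
Proof. by move=> hG e /msuppZ_le /hG. Qed.

Lemma supp_inN o k G : supp_in o k G -> supp_in o k (- G).
Proof. by move=> h; rewrite -scaleN1r; apply: supp_inZ. Qed.

Lemma supp_inM o k G Q : supp_in o k G -> supp_in o k Q -> supp_in o k (G * Q).
Proof.
move=> hG hQ e /msuppM_le /allpairsP [[e1 e2] /= [h1 h2 ->]] i.
by rewrite mnmDE addn_eq0 negb_and => /orP [/(hG _ h1)|/(hQ _ h2)].
Qed.

Lemma supp_in_sum o k (I : Type) (r : seq I) (P : pred I) (f : I -> {mpoly F[n]}) :
  (forall i, P i -> supp_in o k (f i)) -> supp_in o k (\sum_(i <- r | P i) f i).
Proof.
move=> h; elim: r => [|x r IH]; first by rewrite big_nil; apply: supp_in0.
rewrite big_cons; case: ifP => // Px; exact: supp_inD (h _ Px) IH.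
Qed.

Lemma supp_inX o k (j : 'I_n) : (o <= j < o + k)%N -> supp_in o k 'X_j.
Proof. by move=> hj e; rewrite msuppX inE => /eqP -> i; rewrite mnm1E eqb0 negbK => /eqP <-. Qed.

Lemma supp_in_exp o k G s : supp_in o k G -> supp_in o k (G ^+ s).
Proof.
move=> h; elim: s => [|s IH]; first by rewrite expr0; apply: supp_in1.
by rewrite exprS; apply: supp_inM.
Qed.

Lemma supp_in_widen o k o' k' G : (o' <= o)%N -> (o + k <= o' + k')%N ->
  supp_in o k G -> supp_in o' k' G.
Proof.
move=> h1 h2 hG e he i /(hG _ he i) /andP [a b].
by rewrite (leq_trans h1 a) (leq_trans b h2).
Qed.

Lemma supp_in_block o k : supp_in o k (block_sum F n o k).
Proof. by apply: supp_in_sum => i; apply: supp_inX. Qed.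

Lemma supp_mdeg o k G e : supp_in o k G -> e \in msupp G ->
  mdeg e = (\sum_(i < n | (o <= i < o + k)%N) e i)%N.
Proof.
move=> h he; rewrite mdegE (bigID (fun i : 'I_n => (o <= i < o + k)%N)) /=.
rewrite [X in (_ + X)%N]big1 ?addn0 // => i hi.
by apply/eqP; apply: contraNT hi; apply: h.
Qed.

Lemma lamB (V : lmodType F) m (h : nat -> V) o k G : supp_in o k G ->
  lam (fun e => rho m e *: h (mdeg e)) (G * block_sum F n o k) =
  lam (fun e => rho m e *: (((mdeg e)%:R - (Mb m o k)%:~R) *: h (mdeg e).+1)) G.
Proof.
move=> hG; rewrite /block_sum mulr_sumr lam_sum.
rewrite (eq_bigr (fun i => lam (fun e => rho m (e + U_(i))%MM *: h (mdeg e).+1) G)); last first.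
  move=> i _; rewrite lam_mulX; apply: eq_lam => e _.
  by rewrite mdegD mdeg1 addn1.
rewrite -lam_phi_sum; apply: eq_lam => e he.
rewrite -scaler_suml sum_rhoU scalerA; congr (_ *: _); congr (_ * _).
rewrite sumrB (supp_mdeg hG he) natr_sum; congr (_ - _).
by rewrite /Mb rmorph_sum.
Qed.


Lemma lamBs (V : lmodType F) m o k s : forall G, supp_in o k G -> forall (h : nat -> V),
  lam (fun e => rho m e *: h (mdeg e)) (G * block_sum F n o k ^+ s) =
  lam (fun e => rho m e *: ((\prod_(r < s) ((mdeg e + r)%:R - (Mb m o k)%:~R))
       *: h (mdeg e + s)%N)) G.
Proof.
elim: s => [|s IH] G hG h.
  by rewrite expr0 mulr1; apply: eq_lam => e _; rewrite big_ord0 scale1r addn0.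
rewrite exprS mulrA IH; last by apply: supp_inM => //; apply: supp_in_block.
rewrite (lamB m (fun j => (\prod_(r < s) ((j + r)%:R - (Mb m o k)%:~R)) *: h (j + s)%N)) //.
apply: eq_lam => e _ /=.
rewrite scalerA big_ord_recl addn0 addSnnS; congr (_ *: (_ *: _)); congr (_ * _).
by apply: eq_bigr => r _; rewrite /= addSnnS.
Qed.

Lemma binZE (M : int) (d s : nat) :
  binZ F (M - d%:Z) s =
  (s`!%:R)^-1 * ((-1) ^+ s * \prod_(r < s) ((d + r)%:R - M%:~R)).
Proof.
rewrite /binZ mulrC; congr (_ * _).
rewrite (_ : (-1) ^+ s = \prod_(r < s) (-1 : F)); last by rewrite prodr_const card_ord.
rewrite -big_split /=.
apply: eq_bigr => r _; rewrite !intrB natrD.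
rewrite -[(d%:Z)%:~R]/(d%:R) -[(r%:Z)%:~R]/(r%:R).
by rewrite mulN1r opprB opprD addrA.
Qed.

Lemma lamBin (V : lmodType F) m (h : nat -> V) o k G s : supp_in o k G ->
  lam (fun e => rho m e *: h (mdeg e))
      (G * (((s`!)%:R : F)^-1 *: (- block_sum F n o k) ^+ s)) =
  lam (fun e => rho m e *: (binZ F (Mb m o k - (mdeg e)%:Z) s *: h (mdeg e + s)%N)) G.
Proof.
move=> hG; rewrite -scaleN1r exprZn scalerA -scalerAr lamZ (lamBs m s hG h).
rewrite -lam_phiZ; apply: eq_lam => e _.
rewrite binZE !scalerA; congr (_ *: _); ring.
Qed.

Lemma lamMdisj (V : lmodType F) m (h : nat -> V) o k k' G Q :
  supp_in o k G -> supp_in (o + k) k' Q ->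
  lam (fun e => rho m e *: h (mdeg e)) (G * Q) =
  lam (fun e => rho m e *: lam (fun f => rho m f *: h (mdeg e + mdeg f)%N) Q) G.
Proof.
move=> hG hQ; rewrite lam_mul; apply: eq_lam => e he.
rewrite -lam_phiZ; apply: eq_lam => f hf.
rewrite mdegD scalerA rhoD //.
move=> i; case: (boolP (e i == 0%N)) => //= /(hG _ he i) /andP [_ lt1].
apply/negPn/negP => /(hQ _ hf i) /andP [le2 _].
by move: (leq_ltn_trans le2 lt1); rewrite ltnn.
Qed.

End Rho.

Section Gen.
Variables (F : fieldType).

Lemma sum_ind (V : lmodType F) (I : Type) (r : seq I) (P : pred I) (g : I -> V) :
  \sum_(i <- r | P i) g i = \sum_(i <- r) ((P i)%:R : F) *: g i.
Proof.
rewrite big_mkcond; apply: eq_bigr => i _.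
by case: (P i); rewrite ?scale1r ?scale0r.
Qed.

Lemma sum_ind1 (V : lmodType F) (T : eqType) (S : seq T) (a : T) (v : T -> V) :
  uniq S -> a \in S -> \sum_(K <- S) ((a == K)%:R : F) *: v K = v a.
Proof.
move=> uS aS; rewrite -sum_ind -big_filter.
rewrite (_ : [seq K <- S | a == K] = [:: a]) ?big_seq1 //.
rewrite -(filter_pred1_uniq uS aS); apply: eq_filter => K /=.
by rewrite eq_sym.
Qed.

Lemma sum_sub (V : lmodType F) (T : eqType) (S S' : seq T) (v : T -> V) :
  uniq S -> uniq S' -> {subset S <= S'} -> (forall K, K \notin S -> v K = 0) ->
  \sum_(K <- S') v K = \sum_(K <- S) v K.
Proof.
move=> uS uS' sub h; rewrite (bigID (fun K => K \in S)) /=.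
rewrite [X in _ + X]big1 ?addr0; last by move=> K /h.
rewrite -big_filter; apply: perm_big; apply: uniq_perm; rewrite ?filter_uniq //.
by move=> K; rewrite mem_filter; case: (boolP (K \in S)) => // /sub ->.
Qed.

End Gen.

Section Conf.
Variables (F : fieldType) (C : lmodType F) (prod : nat -> C -> C -> C) (N : C -> C -> nat) (n : nat).
Hypothesis prodL : forall s (k : F) x y z, prod s (k *: x + y) z = k *: prod s x z + prod s y z.
Hypothesis prodR : forall s (k : F) x y z, prod s z (k *: x + y) = k *: prod s z x + prod s z y.
Hypothesis prodN : forall a b s, (N a b <= s)%N -> prod s a b = 0.

Definition coll (x : coeff_rep C) (K : int) : C := \sum_(p <- x | p.1 == K) p.2.

Definition PhiP (m : 'I_n -> int) (M : int) (X : pseudo_rep C n) (K : int) : C :=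
  \sum_(q <- X) lam (fun e => rho F m e *: (((M - (mdeg e)%:Z) == K)%:R *: q.2)) q.1.

Lemma group (V : lmodType F) (g : int -> C -> V)
  (glin : forall K a c c', g K (a *: c + c') = a *: g K c + g K c')
  (x : coeff_rep C) (S : seq int) : uniq S -> (forall K, K \notin S -> coll x K = 0) ->
  \sum_(p <- x) g p.1 p.2 = \sum_(K <- S) g K (coll x K).
Proof.
move=> uS hS.
have g0 : forall K, g K 0 = 0.
  move=> K; have := glin K 1 0 0; rewrite !scale1r addr0 => h.
  by have := congr1 (fun v => v - g K 0) h; rewrite subrr addrK => <-.
set S' := undup (S ++ map fst x).
have uS' : uniq S' by apply: undup_uniq.
rewrite -(@sum_sub _ _ _ S S') //; first last.
- by move=> K /hS ->.
- by move=> K KS; rewrite mem_undup mem_cat KS.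
rewrite (eq_big_seq (fun p => \sum_(K <- S') ((p.1 == K)%:R : F) *: g K p.2)); last first.
  move=> p px; rewrite (@sum_ind1 _ _ _ _ _ (fun K => g K p.2)) //.
  by rewrite mem_undup mem_cat; apply/orP; right; apply: map_f.
rewrite exchange_big /=; apply: eq_bigr => K _.
rewrite /coll (lin_sum (glin K)) sum_ind; apply: eq_bigr => p _.
by [].
Qed.

Lemma coll_flatten (I : Type) (r : seq I) (f : I -> coeff_rep C) K :
  coll (flatten (map f r)) K = \sum_(i <- r) coll (f i) K.
Proof. by rewrite /coll big_flatten big_map. Qed.

Lemma PhiP_flatten m M (I : Type) (r : seq I) (f : I -> pseudo_rep C n) K :
  PhiP m M (flatten (map f r)) K = \sum_(i <- r) PhiP m M (f i) K.
Proof. by rewrite /PhiP big_flatten big_map. Qed.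

Lemma PhiP_flat m M (l : seq (pseudo_rep C n)) K :
  PhiP m M (flatten l) K = \sum_(r <- l) PhiP m M r K.
Proof. by rewrite /PhiP big_flatten. Qed.

Lemma scal2_sum (a b : F) (I J : Type) (r : seq I) (r' : seq J) (T : I -> J -> C) :
  a *: (b *: \sum_(i <- r) \sum_(j <- r') T i j) = \sum_(i <- r) \sum_(j <- r') a *: (b *: T i j).
Proof.
rewrite !scaler_sumr; apply: eq_bigr => i _; rewrite !scaler_sumr; apply: eq_bigr => j _.
by [].
Qed.

Lemma prodL0 s z : prod s 0 z = 0.
Proof.
have := prodL s 1 0 0 z; rewrite !scale1r addr0 => h.
by have := congr1 (fun v => v - prod s 0 z) h; rewrite subrr addrK => <-.
Qed.

Lemma prodR0 s z : prod s z 0 = 0.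
Proof.
have := prodR s 1 0 0 z; rewrite !scale1r addr0 => h.
by have := congr1 (fun v => v - prod s z 0) h; rewrite subrr addrK => <-.
Qed.

Lemma prodLZ s a x z : prod s (a *: x) z = a *: prod s x z.
Proof. by rewrite -[a *: x]addr0 prodL prodL0 addr0. Qed.

Lemma prodRZ s a x z : prod s z (a *: x) = a *: prod s z x.
Proof. by rewrite -[a *: x]addr0 prodR prodR0 addr0. Qed.


Definition LL (G Q : {mpoly F[n]}) (w : 'X_{1..n} -> 'X_{1..n} -> F) (P : C) : C :=
  lam (fun e => lam (fun f => w e f *: P) Q) G.

Lemma LLZ G Q w P a : a *: LL G Q w P = LL G Q (fun e f => a * w e f) P.
Proof.
rewrite /LL -lam_phiZ; apply: eq_lam => e _; rewrite -lam_phiZ.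
by apply: eq_lam => f _; rewrite scalerA.
Qed.

Lemma LL_sum G Q (I : Type) (r : seq I) (w : I -> 'X_{1..n} -> 'X_{1..n} -> F) P :
  \sum_(i <- r) LL G Q (w i) P = LL G Q (fun e f => \sum_(i <- r) w i e f) P.
Proof.
rewrite /LL -lam_phi_sum; apply: eq_lam => e _; rewrite -lam_phi_sum.
by apply: eq_lam => f _; rewrite scaler_suml.
Qed.

Lemma eq_LL G Q w w' P : (forall e f, e \in msupp G -> f \in msupp Q -> w e f = w' e f) ->
  LL G Q w P = LL G Q w' P.
Proof.
move=> h; rewrite /LL; apply: eq_lam => e he; apply: eq_lam => f hf.
by rewrite h.
Qed.

Lemma LL_prod G Q (u v : 'X_{1..n} -> F) c d s :
  prod s (lam (fun e => u e *: c) G) (lam (fun f => v f *: d) Q) =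
  LL G Q (fun e f => u e * v f) (prod s c d).
Proof.
rewrite (lam_map (f := fun x => prod s x (lam (fun f => v f *: d) Q))); last first.
  by move=> a x y; rewrite prodL.
rewrite /LL; apply: eq_lam => e _; rewrite prodLZ.
rewrite (lam_map (f := fun y => prod s c y)); last by move=> a x y; rewrite prodR.
rewrite -lam_phiZ; apply: eq_lam => f _.
by rewrite prodRZ scalerA.
Qed.

Lemma LL_lam G Q (a : 'X_{1..n} -> F) (b : 'X_{1..n} -> 'X_{1..n} -> F) P :
  lam (fun e => a e *: lam (fun f => b e f *: P) Q) G = LL G Q (fun e f => a e * b e f) P.
Proof.
rewrite /LL; apply: eq_lam => e _; rewrite -lam_phiZ.
by apply: eq_lam => f _; rewrite scalerA.
Qed.

Lemma sum_ind1F (T : eqType) (S : seq T) (a : T) (v : T -> F) :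
  uniq S -> a \in S -> \sum_(K <- S) ((a == K)%:R : F) * v K = v a.
Proof.
move=> uS aS.
rewrite (eq_bigr (fun K => (if a == K then v K else 0))); last first.
  by move=> K _; case: (a == K); rewrite ?mul1r ?mul0r.
rewrite -big_mkcond -big_filter.
rewrite (_ : [seq K <- S | a == K] = [:: a]) ?big_seq1 //.
rewrite -(filter_pred1_uniq uS aS); apply: eq_filter => K /=.
by rewrite eq_sym.
Qed.

Lemma step_core m o k k' (S1 S2 : seq int) G Q (c d : C) s K :
  supp_in o k G -> supp_in (o + k) k' Q -> uniq S1 -> uniq S2 ->
  (forall e, e \in msupp G -> Mb m o k - (mdeg e)%:Z \in S1) ->
  (forall f, f \in msupp Q -> Mb m (o + k) k' - (mdeg f)%:Z \in S2) ->
  \sum_(K1 <- S1) \sum_(K2 <- S2) ((K1 + K2 - s%:Z == K)%:R : F) *: (binZ F K1 s *: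
     prod s (lam (fun e => rho F m e *: (((Mb m o k - (mdeg e)%:Z) == K1)%:R *: c)) G)
            (lam (fun f => rho F m f *: (((Mb m (o + k) k' - (mdeg f)%:Z) == K2)%:R *: d)) Q))
  = lam (fun E => rho F m E *: (((Mb m o k + Mb m (o + k) k' - (mdeg E)%:Z) == K)%:R *: prod s c d))
        (G * ((s`!%:R)^-1 *: (- block_sum F n o k) ^+ s) * Q).
Proof.
move=> hG hQ uS1 uS2 h1 h2.
have hGB : supp_in o k (G * ((s`!%:R)^-1 *: (- block_sum F n o k) ^+ s)).
  apply: supp_inM => //; apply: supp_inZ; apply: supp_in_exp; apply: supp_inN.
  exact: supp_in_block.
set M1 := Mb m o k; set M2 := Mb m (o + k) k'.
rewrite (lamMdisj m (fun j => ((M1 + M2 - j%:Z == K)%:R : F) *: prod s c d) hGB hQ).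
rewrite (lamBin m (fun j => lam (fun f => rho F m f *: (((M1 + M2 - (j + mdeg f)%N%:Z == K)%:R : F) *: prod s c d)) Q) s hG).
have E1 : forall (K1 : int), lam (fun e => rho F m e *: (((M1 - (mdeg e)%:Z) == K1)%:R *: c)) G =
   lam (fun e => (rho F m e * ((M1 - (mdeg e)%:Z) == K1)%:R) *: c) G.
  by move=> K1; apply: eq_lam => e _; rewrite scalerA.
have E2 : forall (K2 : int), lam (fun f => rho F m f *: (((M2 - (mdeg f)%:Z) == K2)%:R *: d)) Q =
   lam (fun f => (rho F m f * ((M2 - (mdeg f)%:Z) == K2)%:R) *: d) Q.
  by move=> K2; apply: eq_lam => e _; rewrite scalerA.
under eq_bigr => K1 _ do under eq_bigr => K2 _ do rewrite E1 E2 LL_prod !LLZ.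
under eq_bigr => K1 _ do rewrite LL_sum.
rewrite LL_sum.
rewrite (eq_lam (psi := fun e => (rho F m e * binZ F (M1 - (mdeg e)%:Z) s) *:
   lam (fun f => (rho F m f * ((M1 + M2 - (mdeg e + s + mdeg f)%N%:Z == K)%:R)) *: prod s c d) Q)); last first.
  move=> e _; rewrite -scalerA; congr (_ *: (_ *: _)); apply: eq_lam => f _.
  by rewrite scalerA.
rewrite LL_lam; apply: eq_LL => e f he hf.
rewrite (eq_bigr (fun K1 => ((M1 - (mdeg e)%:Z == K1)%:R : F) * ((((K1 + (M2 - (mdeg f)%:Z) - s%:Z) == K)%:R : F) * (binZ F K1 s * (rho F m e * rho F m f))))); last first.
  move=> K1 _.
  rewrite (eq_bigr (fun K2 => ((M2 - (mdeg f)%:Z == K2)%:R : F) * ((((K1 + K2 - s%:Z) == K)%:R : F) * (binZ F K1 s * (rho F m e * (((M1 - (mdeg e)%:Z == K1)%:R : F) * rho F m f)))))); last by move=> K2 _; ring.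
  rewrite (@sum_ind1F _ _ _ (fun K2 => ((((K1 + K2 - s%:Z) == K)%:R : F) * (binZ F K1 s * (rho F m e * (((M1 - (mdeg e)%:Z == K1)%:R : F) * rho F m f))))) uS2 (h2 _ hf)).
  ring.
rewrite (@sum_ind1F _ _ _ (fun K1 => ((((K1 + (M2 - (mdeg f)%:Z) - s%:Z) == K)%:R : F) * (binZ F K1 s * (rho F m e * rho F m f)))) uS1 (h1 _ he)).
have -> : M1 - (mdeg e)%:Z + (M2 - (mdeg f)%:Z) - s%:Z = M1 + M2 - (mdeg e + s + mdeg f)%N%:Z.
  by rewrite !PoszD; ring.
ring.
Qed.


Lemma lam_zero (V : lmodType F) (G : {mpoly F[n]}) : lam (fun _ => (0 : V)) G = 0.
Proof. by rewrite /lam big1 // => e _; rewrite scaler0. Qed.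

Lemma Sset_uniq (M : int) L : uniq [seq M - j%:Z | j <- iota 0 L].
Proof.
rewrite map_inj_uniq ?iota_uniq // => a b.
by move/addrI/oppr_inj/eqP; rewrite eqz_nat => /eqP.
Qed.

Lemma iota_ext (V : lmodType F) (f : nat -> V) N0 Sb : (N0 <= Sb)%N ->
  (forall s, (N0 <= s)%N -> f s = 0) ->
  \sum_(s <- iota 0 N0) f s = \sum_(s <- iota 0 Sb) f s.
Proof.
move=> le h; rewrite -(subnKC le) iotaD big_cat /= [X in _ = _ + X]big1_seq ?addr0 //.
by move=> s /andP [_]; rewrite mem_iota => /andP [le1 _]; apply: h.
Qed.

Lemma prod_sum2 s (I J : Type) (r : seq I) (r' : seq J) (A : I -> C) (B : J -> C) :
  prod s (\sum_(i <- r) A i) (\sum_(j <- r') B j) = \sum_(i <- r) \sum_(j <- r') prod s (A i) (B j).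
Proof.
rewrite (lin_sum (f := fun c => prod s c (\sum_(j <- r') B j))); last by move=> a c c'; rewrite prodL.
by apply: eq_bigr => i _; rewrite (lin_sum (f := fun c => prod s (A i) c)).
Qed.

Lemma mul_step m o k k' (x y : coeff_rep C) (X Y : pseudo_rep C n) :
  (forall K, coll x K = PhiP m (Mb m o k) X K) ->
  (forall K, coll y K = PhiP m (Mb m (o + k) k') Y K) ->
  (forall q, q \in X -> supp_in o k q.1) ->
  (forall q, q \in Y -> supp_in (o + k) k' q.1) ->
  forall K, coll (coeff_mul prod N x y) K =
    PhiP m (Mb m o k + Mb m (o + k) k') (pseudo_mul prod N o k X Y) K.
Proof.
move=> hx hy sX sY K.
set M1 := Mb m o k; set M2 := Mb m (o + k) k'.
set S1 := [seq M1 - j%:Z | j <- iota 0 (\max_(q <- X) msize q.1)].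
set S2 := [seq M2 - j%:Z | j <- iota 0 (\max_(q <- Y) msize q.1)].
have uS1 : uniq S1 by apply: Sset_uniq.
have uS2 : uniq S2 by apply: Sset_uniq.
have inS1 : forall q e, q \in X -> e \in msupp q.1 -> M1 - (mdeg e)%:Z \in S1.
  move=> q e qX he; apply: map_f; rewrite mem_iota add0n /=.
  by apply: (leq_trans (msize_mdeg_lt he)); apply: (leq_bigmax_seq (F := fun q => msize q.1)).
have inS2 : forall q e, q \in Y -> e \in msupp q.1 -> M2 - (mdeg e)%:Z \in S2.
  move=> q e qX he; apply: map_f; rewrite mem_iota add0n /=.
  by apply: (leq_trans (msize_mdeg_lt he)); apply: (leq_bigmax_seq (F := fun q => msize q.1)).
have vx : forall K1, K1 \notin S1 -> coll x K1 = 0.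
  move=> K1 nK1; rewrite hx /PhiP big1_seq // => q /andP [_ qX].
  rewrite -(lam_zero _ q.1); apply: eq_lam => e he.
  case: eqP => [E|]; last by rewrite scale0r scaler0.
  by move: nK1; rewrite -E (inS1 _ _ qX he).
have vy : forall K2, K2 \notin S2 -> coll y K2 = 0.
  move=> K2 nK2; rewrite hy /PhiP big1_seq // => q /andP [_ qX].
  rewrite -(lam_zero _ q.1); apply: eq_lam => e he.
  case: eqP => [E|]; last by rewrite scale0r scaler0.
  by move: nK2; rewrite -E (inS2 _ _ qX he).
set Sb := maxn (\max_(p <- x) \max_(q <- y) N p.2 q.2) (\max_(q <- X) \max_(q' <- Y) N q.2 q'.2).
rewrite /coeff_mul coll_flatten.
under eq_bigr => p _ do rewrite coll_flatten.
transitivity (\sum_(s <- iota 0 Sb) \sum_(K1 <- S1) \sum_(K2 <- S2)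
   (((K1 + K2 - s%:Z == K)%:R : F) *: (binZ F K1 s *: prod s (coll x K1) (coll y K2)))).
  transitivity (\sum_(p <- x) \sum_(q <- y) \sum_(s <- iota 0 Sb)
     (((p.1 + q.1 - s%:Z == K)%:R : F) *: (binZ F p.1 s *: prod s p.2 q.2))).
    apply: eq_big_seq => p px; apply: eq_big_seq => q qy.
    rewrite /coll big_map sum_ind; apply: iota_ext.
      apply: leq_trans (leq_maxl _ _).
      apply: leq_trans (leq_bigmax_seq (F := fun p => \max_(q <- y) N p.2 q.2) _ px _) => //.
      exact: (leq_bigmax_seq (F := fun q => N p.2 q.2)).
    by move=> s hs; rewrite prodN // !scaler0.
  under eq_bigr => p _ do rewrite exchange_big.
  rewrite exchange_big; apply: eq_bigr => s _.
  rewrite (eq_bigr (fun p => \sum_(K2 <- S2) (((p.1 + K2 - s%:Z == K)%:R : F) *: (binZ F p.1 s *: prod s p.2 (coll y K2))))); last first.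
    move=> p _; apply: (@group _ (fun K2 d => ((p.1 + K2 - s%:Z == K)%:R : F) *: (binZ F p.1 s *: prod s p.2 d))) => //.
    move=> K2 a c c'; rewrite prodR !scalerDr; congr (_ + _); rewrite !scalerA; congr (_ *: _); ring.
  apply: (@group _ (fun K1 c => \sum_(K2 <- S2) (((K1 + K2 - s%:Z == K)%:R : F) *: (binZ F K1 s *: prod s c (coll y K2))))) => //.
  move=> K1 a c c'; rewrite scaler_sumr -big_split; apply: eq_bigr => K2 _.
  rewrite prodL !scalerDr; congr (_ + _); rewrite !scalerA; congr (_ *: _); ring.
transitivity (\sum_(s <- iota 0 Sb) \sum_(q <- X) \sum_(q' <- Y)
   lam (fun e => rho F m e *: (((M1 + M2 - (mdeg e)%:Z) == K)%:R *: prod s q.2 q'.2))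
     (q.1 * ((s`!%:R)^-1 *: (- block_sum F n o k) ^+ s) * q'.1)); last first.
  rewrite /pseudo_mul PhiP_flat big_map.
  under eq_bigr => q _ do rewrite PhiP_flat big_map.
  rewrite exchange_big; apply: eq_big_seq => q qX.
  rewrite exchange_big; apply: eq_big_seq => q' qY.
  rewrite /PhiP big_map; apply: esym; apply: iota_ext.
    apply: leq_trans (leq_maxr _ _).
    apply: leq_trans (leq_bigmax_seq (F := fun q => \max_(q' <- Y) N q.2 q'.2) _ qX _) => //.
    exact: (leq_bigmax_seq (F := fun q' => N q.2 q'.2)).
  move=> s hs; rewrite prodN // (eq_lam (psi := fun _ => 0)) ?lam_zero // => e _.
  by rewrite !scaler0.
apply: eq_bigr => s _.
under eq_bigr => K1 _ do under eq_bigr => K2 _ do rewrite hx hy /PhiP prod_sum2 scal2_sum.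
under eq_bigr => K1 _ do rewrite exchange_big.
under eq_bigr => K1 _ do under eq_bigr => q _ do rewrite exchange_big.
rewrite exchange_big; under eq_bigr => q _ do rewrite exchange_big.
apply: eq_big_seq => q qX; apply: eq_big_seq => q' qY.
apply: step_core => //; [exact: sX | exact: sY | move=> e; exact: inS1 qX | move=> e; exact: inS2 qY].
Qed.

End Conf.

Lemma Mb_add n (m : 'I_n -> int) o a b :
  Mb m o a + Mb m (o + a) b = Mb m o (a + b).
Proof.
rewrite /Mb [RHS](bigID (fun i : 'I_n => (i < o + a)%N)) /=; congr (_ + _).
  apply: eq_bigl => i; apply/idP/idP; lia.
apply: eq_bigl => i; apply/idP/idP; lia.
Qed.

Section Brk.
Variables (F : fieldType) (C : lmodType F) (prod : nat -> C -> C -> C) (N : C -> C -> nat) (n : nat).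
Hypothesis prodL : forall s (k : F) x y z, prod s (k *: x + y) z = k *: prod s x z + prod s y z.
Hypothesis prodR : forall s (k : F) x y z, prod s z (k *: x + y) = k *: prod s z x + prod s z y.
Hypothesis prodN : forall a b s, (N a b <= s)%N -> prod s a b = 0.
Variables (m : 'I_n -> int) (g : nat -> C) (g' : nat -> coeff_rep C).
Hypothesis hg : forall i (hi : (i < n)%N), g' i = [:: (m (Ordinal hi), g i)].

Lemma brk_inv t : forall o, (o + leaves t <= n)%N ->
  (forall K, coll (brk_eval (coeff_mul prod N) t g' o) K =
     PhiP m (Mb m o (leaves t)) (pseudo_eval prod N n t g o) K) /\
  (forall q, q \in pseudo_eval prod N n t g o -> supp_in o (leaves t) q.1).
Proof.
elim: t => [|l IHl r IHr] o /= hon.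
  have hi : (o < n)%N by rewrite -addn1.
  split; last by move=> q; rewrite inE => /eqP -> /=; apply: supp_in1.
  move=> K; rewrite (hg hi) /coll /PhiP !big_cons !big_nil /= lam1 rho0 scale1r mdeg0 subr0 addr0.
  have -> : Mb m o 1 = m (Ordinal hi).
    rewrite /Mb (big_pred1 (Ordinal hi)) // => i /=.
    apply/idP/eqP; first by move=> h; apply: val_inj => /=; lia.
    by move=> ->; rewrite /= leqnn addn1 ltnSn.
  by rewrite addr0; case: eqP; rewrite ?scale1r ?scale0r.
have hl : (o + leaves l <= n)%N by lia.
have hr : (o + leaves l + leaves r <= n)%N by lia.
have [hl1 hl2] := IHl o hl.
have [hr1 hr2] := IHr (o + leaves l) hr.
split.
  move=> K; rewrite -Mb_add; exact: (mul_step prodL prodR prodN hl1 hr1 hl2 hr2).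
move=> q /flattenP [rr /mapP [p pX ->] /flattenP [rr' /mapP [q' qY ->] /mapP [s _ ->]]] /=.
apply: supp_inM; [apply: supp_inM|].
- by apply: (supp_in_widen (k := leaves l) (o := o)) (hl2 _ pX) => //; rewrite addnA leq_addr.
- apply: (supp_in_widen (k := leaves l) (o := o)) => //; first by rewrite addnA leq_addr.
  apply: supp_inZ; apply: supp_in_exp; apply: supp_inN; exact: supp_in_block.
- by apply: (supp_in_widen (k := leaves r) (o := o + leaves l)) (hr2 _ qY) => //; rewrite ?leq_addr // addnA.
Qed.

End Brk.

Section Perm.
Variables (F : fieldType) (n : nat) (s : 'S_n).

Definition pmnm (e : 'X_{1..n}) : 'X_{1..n} := [multinom e (s^-1 i)%g | i < n].

Lemma comp_perm_X e :
  'X_[e] \mPo [tuple 'X_(s i) | i < n] = 'X_[pmnm e] :> {mpoly F[n]}.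
Proof.
rewrite comp_mpolyX (mpolyXE _ s); apply: eq_bigr => i _.
by rewrite tnth_mktuple /pmnm mnmE permK.
Qed.

Lemma lam_perm (V : lmodType F) (phi : 'X_{1..n} -> V) (G : {mpoly F[n]}) :
  lam phi (G \mPo [tuple 'X_(s i) | i < n]) = lam (fun e => phi (pmnm e)) G.
Proof.
rewrite comp_mpolyEX lam_sum [RHS]/lam; apply: eq_bigr => e _.
by rewrite comp_perm_X lamZ lamX.
Qed.

Lemma rho_perm (m : 'I_n -> int) e : rho F m (pmnm e) = rho F (fun i => m (s i)) e.
Proof.
rewrite /rho (reindex_inj (@perm_inj _ s)) /=; apply: eq_bigr => i _.
by rewrite /pmnm mnmE permK.
Qed.

Lemma mdeg_perm e : mdeg (pmnm e) = mdeg e.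
Proof.
rewrite !mdegE (reindex_inj (@perm_inj _ s)) /=; apply: eq_bigr => i _.
by rewrite /pmnm mnmE permK.
Qed.

End Perm.

Lemma coll_flat (F : fieldType) (C : lmodType F) (l : seq (coeff_rep C)) K :
  coll (flatten l) K = \sum_(r <- l) coll r K.
Proof. by rewrite /coll big_flatten. Qed.

Lemma coll_scale (F : fieldType) (C : lmodType F) (k : F) (x : coeff_rep C) K :
  coll (coeff_scale k x) K = k *: coll x K.
Proof.
rewrite /coll /coeff_scale big_map scaler_sumr; apply: eq_bigl => p.
by [].
Qed.

Lemma Mb_full n (m : 'I_n -> int) : Mb m 0 n = \sum_(i < n) m i.
Proof. by rewrite /Mb; apply: eq_bigl => i; rewrite leq0n ltn_ord. Qed.

Lemma sum_perm n (s : 'S_n) (m : 'I_n -> int) : \sum_(i < n) m (s i) = \sum_(i < n) m i.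
Proof. by rewrite [RHS](reindex_inj (@perm_inj _ s)). Qed.

Section Top.
Variables (F : fieldType) (C : lmodType F) (prod : nat -> C -> C -> C) (N : C -> C -> nat) (n : nat).
Hypothesis prodL : forall s (k : F) x y z, prod s (k *: x + y) z = k *: prod s x z + prod s y z.
Hypothesis prodR : forall s (k : F) x y z, prod s z (k *: x + y) = k *: prod s z x + prod s z y.
Hypothesis prodN : forall a b s, (N a b <= s)%N -> prod s a b = 0.

Lemma link (P : ml_poly F n) (wfP : ml_poly_wf P) (m : 'I_n -> int) (a : 'I_n -> C) K :
  coll (coeff_eval prod N P (fun i => [:: (m i, a i)])) K =
  PhiP m (\sum_(i < n) m i) (pseudo_poly_eval prod N P a) K.
Proof.
rewrite /coeff_eval /pseudo_poly_eval coll_flat PhiP_flat !big_map.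
apply: eq_bigr => s _; rewrite coll_flat PhiP_flat !big_map.
move: (wfP s); elim: (P s) => [|p r IH]; first by rewrite !big_nil.
rewrite /= => /andP [/eqP lp hr]; rewrite !big_cons IH //; congr (_ + _).
rewrite coll_scale.
have hg : forall i (hi : (i < n)%N), perm_args [::] s (fun i => [:: (m i, a i)]) i = [:: (m (s (Ordinal hi)), perm_args 0 s a i)].
  move=> i hi; rewrite /perm_args; case: insubP => [j _ ji|]; last by rewrite hi.
  by have -> : Ordinal hi = j by apply: val_inj.
have hlp : (0 + leaves p.2 <= n)%N by rewrite lp.
have [h1 _] := brk_inv (m := fun j => m (s j)) prodL prodR prodN hg hlp.
rewrite h1 /PhiP /perm_factors big_map scaler_sumr big_map; apply: eq_bigr => q _ /=.
rewrite lamZ lam_perm; congr (_ *: _); apply: eq_lam => e _.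
rewrite rho_perm mdeg_perm.
by rewrite lp Mb_full sum_perm.
Qed.


End Top.

Section Neg.
Variables (F : fieldType) (C : lmodType F) (D : C -> C).
Hypothesis charF0 : [pchar F] =i pred0.
Hypothesis Dlin : forall (k : F) x y, D (k *: x + y) = k *: D x + D y.

Definition gneg (K : int) (c : C) : C :=
  match K with Negz j => (j`!%:R)^-1 *: iter j D c | Posz _ => 0 end.

Lemma iter_lin j a c c' : iter j D (a *: c + c') = a *: iter j D c + iter j D c'.
Proof. by elim: j => [|j IH] //=; rewrite IH Dlin. Qed.

Lemma gneg_lin K a c c' : gneg K (a *: c + c') = a *: gneg K c + gneg K c'.
Proof.
case: K => [k|j] /=; first by rewrite scaler0 addr0.
by rewrite iter_lin scalerDr !scalerA mulrC.
Qed.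

Lemma natf_neq0 k : (k.+1%:R : F) != 0.
Proof. by move/pcharf0P: charF0 => ->. Qed.

Lemma gneg_bal K c : gneg K (D c) = - (K%:~R *: gneg (K - 1) c).
Proof.
case: K => [[|k]|j] /=.
- by rewrite scale0r oppr0.
- by rewrite scaler0 oppr0.
rewrite addn0 -iterS -iterSr scalerA NegzE intrN mulNr scaleNr opprK.
rewrite -[(j.+1%:Z)%:~R]/(j.+1%:R).
congr (_ *: _); rewrite factS natrM invfM mulrA mulfV ?mul1r //.
exact: natf_neq0.
Qed.

Lemma gnegN1 c : gneg (-1) c = c.
Proof. by rewrite /= fact0 invr1 scale1r. Qed.

Lemma gneg_pos (k : nat) c : gneg k%:Z c = 0.
Proof. by []. Qed.

End Neg.

Section SF.
Variables (F : fieldType) (C : lmodType F) (D : C -> C) (prod : nat -> C -> C -> C) (N : C -> C -> nat) (n : nat).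
Hypothesis charF0 : [pchar F] =i pred0.
Hypothesis Dlin : forall (k : F) x y, D (k *: x + y) = k *: D x + D y.
Hypothesis prodL : forall s (k : F) x y z, prod s (k *: x + y) z = k *: prod s x z + prod s y z.
Hypothesis prodR : forall s (k : F) x y z, prod s z (k *: x + y) = k *: prod s z x + prod s z y.
Hypothesis prodN : forall a b s, (N a b <= s)%N -> prod s a b = 0.

Definition Sfun (m : 'I_n -> int) (G : {mpoly F[n]}) (c : C) : C :=
  lam (fun e => rho F m e *: gneg D (\sum_(i < n) m i - (mdeg e)%:Z) c) G.

Lemma gneg0 K : gneg D K 0 = 0.
Proof.
have := gneg_lin Dlin K 1 0 0; rewrite !scale1r addr0 => h.
by have := congr1 (fun v => v - gneg D K 0) h; rewrite subrr addrK => <-.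
Qed.

Lemma gnegZ K a c : gneg D K (a *: c) = a *: gneg D K c.
Proof. by rewrite -[a *: c]addr0 gneg_lin // gneg0 addr0. Qed.

Lemma Sfun_zero (P : ml_poly F n) (wfP : ml_poly_wf P) (hyp : coeff_satisfies D prod N P)
   (a : 'I_n -> C) m :
  \sum_(q <- pseudo_poly_eval prod N P a) Sfun m q.1 q.2 = 0.
Proof.
set X := pseudo_poly_eval prod N P a; set M := \sum_(i < n) m i.
set ce := coeff_eval prod N P (fun i => [:: (m i, a i)]).
have h0 : \sum_(p <- ce) gneg D p.1 p.2 = 0.
  apply: (hyp (fun i => [:: (m i, a i)]) C (gneg D)).
    by move=> K k c c'; apply: gneg_lin.
  by move=> K c; apply: gneg_bal.
set S := [seq M - j%:Z | j <- iota 0 (\max_(q <- X) msize q.1)].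
have uS : uniq S by apply: Sset_uniq.
have inS : forall q e, q \in X -> e \in msupp q.1 -> M - (mdeg e)%:Z \in S.
  move=> q e qX he; apply: map_f; rewrite mem_iota add0n /=.
  by apply: (leq_trans (msize_mdeg_lt he)); apply: (leq_bigmax_seq (F := fun q => msize q.1)).
have hS : forall K, K \notin S -> coll ce K = 0.
  move=> K nK; rewrite (link prodL prodR prodN wfP) /PhiP big1_seq // => q /andP [_ qX].
  rewrite (eq_lam (psi := fun _ => 0)) ?lam_zero // => e he.
  case: eqP => [E|]; last by rewrite scale0r scaler0.
  by move: nK; rewrite -E (inS _ _ qX he).
transitivity (\sum_(p <- ce) gneg D p.1 p.2); last exact: h0.
rewrite (group (fun K => gneg_lin Dlin K) uS hS).
under [RHS]eq_bigr => K _ do rewrite (link prodL prodR prodN wfP) /PhiP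
  (lin_sum (fun a c c' => gneg_lin Dlin K a c c')).
rewrite exchange_big; apply: eq_big_seq => q qX.
under eq_bigr => K _ do rewrite (lam_map (gneg_lin Dlin K)).
rewrite -lam_phi_sum /Sfun; apply: eq_lam => e he.
rewrite (eq_bigr (fun K => rho F m e *: (((M - (mdeg e)%:Z == K)%:R : F) *: gneg D K q.2))); last first.
  by move=> K _; rewrite !gnegZ.
rewrite -scaler_sumr; congr (_ *: _).
by rewrite (@sum_ind1 _ _ _ _ _ (fun K => gneg D K q.2)) // (inS _ _ qX he).
Qed.

End SF.

Section Bal.
Variables (F : fieldType) (C : lmodType F) (D : C -> C) (n : nat).
Hypothesis charF0 : [pchar F] =i pred0.
Hypothesis Dlin : forall (k : F) x y, D (k *: x + y) = k *: D x + D y.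
Variables (W : lmodType F) (beta : {mpoly F[n]} -> C -> W).
Hypothesis bL : forall (k : F) G G' c, beta (k *: G + G') c = k *: beta G c + beta G' c.
Hypothesis bR : forall (k : F) G c c', beta G (k *: c + c') = k *: beta G c + beta G c'.
Hypothesis bB : forall G (h : {poly F}) c, beta (G * Delta n h) c = beta G (hact D h c).

Local Notation B := (\sum_(i < n) ('X_i : {mpoly F[n]})).
Local Notation Sf := (@Sfun F C D n).

Lemma Delta_X : Delta n 'X = B.
Proof. by rewrite /Delta (map_polyX (mpolyC n (R := F))) hornerX. Qed.

Lemma hact_X c : hact D 'X c = D c.
Proof.
rewrite /hact size_polyX !big_ord_recl big_ord0 /= !coefX /= scale0r add0r addr0.
by rewrite scale1r.
Qed.

Lemma betaB G c : beta (G * B) c = beta G (D c).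
Proof. by rewrite -Delta_X bB hact_X. Qed.

Lemma betaR0 G : beta G 0 = 0.
Proof.
have := bR 1 G 0 0; rewrite !scale1r addr0 => h.
by have := congr1 (fun v => v - beta G 0) h; rewrite subrr addrK => <-.
Qed.

Lemma betaRZ G a c : beta G (a *: c) = a *: beta G c.
Proof. by rewrite -[a *: c]addr0 bR betaR0 addr0. Qed.

Lemma betaR_sum G (I : Type) (r : seq I) (f : I -> C) :
  beta G (\sum_(i <- r) f i) = \sum_(i <- r) beta G (f i).
Proof. by rewrite (lin_sum (f := beta G)) // => a x y; rewrite bR. Qed.

Lemma Sfun_linG m a G G' c : Sf m (a *: G + G') c = a *: Sf m G c + Sf m G' c.
Proof. by rewrite /Sfun lam_lin. Qed.

Lemma Sfun_linc m G a c c' : Sf m G (a *: c + c') = a *: Sf m G c + Sf m G c'.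
Proof.
rewrite /Sfun -lam_phi_lin; apply: eq_lam => e _.
by rewrite gneg_lin // scalerDr !scalerA mulrC.
Qed.

Lemma Sfun_X m e c : Sf m 'X_[e] c = rho F m e *: gneg D (\sum_(i < n) m i - (mdeg e)%:Z) c.
Proof. by rewrite /Sfun lamX. Qed.

Lemma Sfun_bal m G c : Sf m (G * B) c = Sf m G (D c).
Proof.
rewrite /Sfun mulr_sumr lam_sum.
under eq_bigr => i _ do rewrite lam_mulX.
rewrite -lam_phi_sum; apply: eq_lam => e _.
rewrite (eq_bigr (fun i => rho F m (e + U_(i))%MM *: gneg D (\sum_(i < n) m i - (mdeg e)%:Z - 1) c)); last first.
  by move=> i _; rewrite mdegD mdeg1 PoszD opprD addrA.
rewrite -scaler_suml sum_rhoU gneg_bal // -scaleNr scalerA; congr (_ *: _).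
congr (_ * _); rewrite sumrB mdegE rmorph_sum /= intrB opprB.
by congr (_ - _); rewrite [RHS]rmorph_sum.
Qed.


Variables (i0 : 'I_n) (d : nat).
Implicit Types (e : 'X_{1..n}).

Definition mE (e : 'X_{1..n}) : 'I_n -> int := fun i => if i == i0 then -1 else (e i)%:Z.
Definition kap (e : 'X_{1..n}) : F := (rho F (mE e) e)^-1.

Definition RR (G : {mpoly F[n]}) (c : C) : W :=
  \sum_(e : 'X_{1..n < d} | e i0 == 0%N) kap e *: beta 'X_[e] (Sf (mE e) G c).

Definition TT G c := beta G c - RR G c.

Lemma RR_lin a G G' c : RR (a *: G + G') c = a *: RR G c + RR G' c.
Proof.
rewrite /RR scaler_sumr -big_split; apply: eq_bigr => e _ /=.
by rewrite Sfun_linG bR scalerDr !scalerA mulrC.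
Qed.

Lemma TT_lin a G G' c : TT (a *: G + G') c = a *: TT G c + TT G' c.
Proof. by rewrite /TT RR_lin bL scalerBr opprD addrACA. Qed.

Lemma TT_bal G c : TT (G * B) c = TT G (D c).
Proof.
rewrite /TT betaB /RR; congr (_ - _); apply: eq_bigr => e _.
by rewrite Sfun_bal.
Qed.

Lemma TT0 c : TT 0 c = 0.
Proof.
have := TT_lin 1 0 0 c; rewrite !scale1r addr0 => h.
by have := congr1 (fun v => v - TT 0 c) h; rewrite subrr addrK => <-.
Qed.

Lemma TTZ a G c : TT (a *: G) c = a *: TT G c.
Proof. by rewrite -[a *: G]addr0 TT_lin TT0 addr0. Qed.

Lemma TTD G G' c : TT (G + G') c = TT G c + TT G' c.
Proof. by rewrite -{1}[G]scale1r TT_lin scale1r. Qed.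

Lemma TTB G G' c : TT (G - G') c = TT G c - TT G' c.
Proof. by rewrite TTD -[- G']scaleN1r TTZ scaleN1r. Qed.

Lemma TT_sum (I : Type) (r : seq I) (P : pred I) (f : I -> {mpoly F[n]}) c :
  TT (\sum_(i <- r | P i) f i) c = \sum_(i <- r | P i) TT (f i) c.
Proof.
elim: r => [|x r IH]; first by rewrite !big_nil TT0.
by rewrite !big_cons; case: (P x); rewrite ?TTD IH.
Qed.



Lemma Posz_sum (I : Type) (r : seq I) (P : pred I) (f : I -> nat) :
  (\sum_(i <- r | P i) f i)%N%:Z = \sum_(i <- r | P i) (f i)%:Z.
Proof.
elim: r => [|x r IH]; first by rewrite !big_nil.
by rewrite !big_cons; case: (P x); rewrite ?PoszD IH.
Qed.

Lemma sum_mE e : e i0 = 0%N -> \sum_(i < n) mE e i = (mdeg e)%:Z - 1.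
Proof.
move=> he; rewrite (bigD1 i0) //= {1}/mE eqxx [in RHS]mdegE [in RHS](bigD1 i0) //= he add0n Posz_sum addrC.
by congr (_ + _); apply: eq_bigr => i ne; rewrite /mE (negbTE ne).
Qed.

Lemma rho_mE_neq0 e : e i0 = 0%N -> rho F (mE e) e != 0.
Proof.
move=> he; apply/prodf_neq0 => i _; rewrite /mE.
case: (eqVneq i i0) => [->|ne]; first by rewrite ?eqxx he ff0 oner_neq0.
apply/prodf_neq0 => j _; rewrite -[((e i)%:Z)%:~R]/((e i)%:R).
have lt := ltn_ord j.
rewrite -oppr_eq0 opprB -natrB ?(ltnW lt) // -(subnSK lt).
exact: natf_neq0.
Qed.

Lemma rho_zero e (e' : 'X_{1..n}) i : (e' i < e i)%N -> i != i0 -> rho F (mE e') e = 0.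
Proof.
move=> lt ne; rewrite /rho (bigD1 i) //= /mE (negbTE ne) /ff (bigD1 (Ordinal lt)) //=.
by rewrite -[((e' i)%:Z)%:~R]/((e' i)%:R) subrr !mul0r.
Qed.

Lemma TT_base e c : e i0 = 0%N -> (mdeg e < d)%N -> TT 'X_[e] c = 0.
Proof.
move=> he hd; pose eb : 'X_{1..n < d} := BMultinom hd.
rewrite /TT /RR (bigD1 eb) /=; last by rewrite he.
rewrite Sfun_X sum_mE // (_ : (mdeg e)%:Z - 1 - (mdeg e)%:Z = -1); last by ring.
rewrite gnegN1 betaRZ scalerA /kap mulVf ?scale1r ?rho_mE_neq0 //.
rewrite big1 ?addr0 ?subrr // => e' /andP [he' ne'].
rewrite Sfun_X sum_mE ?(eqP he') //.
case: (ltnP (mdeg e) (mdeg e')) => hlt.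
  rewrite (_ : (mdeg e')%:Z - 1 - (mdeg e)%:Z = Posz (mdeg e' - mdeg e - 1)); last first.
    by lia.
  by rewrite gneg_pos scaler0 betaR0 scaler0.
case: (pickP (fun i => e' i < e i)%N) => [i hi | none].
  have ne : i != i0 by apply/eqP => E; move: hi; rewrite E he.
  by rewrite (rho_zero hi ne) scale0r betaR0 scaler0.
exfalso; move/negP: ne'; apply; rewrite bmeqP /=.
have le : (e <= e')%MM by apply/mnm_lepP => i; move: (none i) => /= /negbT; rewrite -leqNgt.
have := submK le; move=> E.
have : mdeg (e' - e)%MM = 0%N.
  by move: hlt; rewrite -{1}E mdegD; lia.
move/eqP; rewrite mdeg_eq0 => /eqP Z.
by rewrite -E Z add0m.
Qed.

Lemma TT_ind k : forall e c, e i0 = k -> (mdeg e < d)%N -> TT 'X_[e] c = 0.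
Proof.
elim: k => [|k IH] e c he hd; first exact: TT_base.
set e0 := (e - U_(i0))%MM.
have ee : e = (e0 + U_(i0))%MM by rewrite submK // lep1mP he.
have h0 : e0 i0 = k by rewrite mnmBE mnm1E eqxx he subn1.
have hd0 : (mdeg e0 + 1 = mdeg e)%N by rewrite [in RHS]ee mdegD mdeg1.
have He : 'X_[e] = 'X_[e0] * B - \sum_(i < n | i != i0) 'X_[e0 + U_(i)] :> {mpoly F[n]}.
  rewrite [in LHS]ee mpolyXD (bigD1 i0) //= mulrDr mulr_sumr.
  under [X in _ = _ - X]eq_bigr => i _ do rewrite mpolyXD.
  by rewrite addrK.
rewrite He TTB TT_bal IH //; last by lia.
rewrite TT_sum big1 ?subr0 // => i ne.
apply: IH.
  by rewrite mnmDE mnm1E (negbTE ne) addn0.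
by rewrite mdegD mdeg1; lia.
Qed.

Lemma TT_all G c : (msize G <= d)%N -> TT G c = 0.
Proof.
move=> hG; rewrite (mpolyE G) TT_sum big1_seq // => e /andP [_ he].
rewrite TTZ (@TT_ind (e i0)) ?scaler0 //.
exact: leq_trans (msize_mdeg_lt he) hG.
Qed.

Lemma beta_zero (X : pseudo_rep C n) :
  (forall m, \sum_(q <- X) Sf m q.1 q.2 = 0) ->
  (\max_(q <- X) msize q.1 <= d)%N ->
  \sum_(q <- X) beta q.1 q.2 = 0.
Proof.
move=> hS hX.
transitivity (\sum_(q <- X) RR q.1 q.2).
  apply: eq_big_seq => q qX; apply/eqP; rewrite -subr_eq0; apply/eqP.
  apply: TT_all; apply: leq_trans hX.
  exact: (leq_bigmax_seq (F := fun q => msize q.1)).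
rewrite /RR exchange_big big1 // => e _.
by rewrite -scaler_sumr -betaR_sum hS betaR0 scaler0.
Qed.

End Bal.



Lemma leaves_pos t : (0 < leaves t)%N.
Proof. by elim: t => //= l IHl r _; rewrite addn_gt0 IHl. Qed.

Unset Implicit Arguments.

Theorem theorem3p1 (F : fieldType) (charF0 : [pchar F] =i pred0)
    (C : lmodType F) (D : C -> C) (prod : nat -> C -> C -> C)
    (N : C -> C -> nat) (confC : is_conformal D prod N)
    (n : nat) (P : ml_poly F n) (wfP : ml_poly_wf P) :
  coeff_satisfies D prod N P ->
  forall a : 'I_n -> C, pseudo_zero D (pseudo_poly_eval prod N P a).
Proof.
move=> hyp a W beta bL bR bB.
case: confC => Dlin [prodL [prodR [prodN _]]].
case: (posnP n) => [n0 | npos].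
  rewrite /pseudo_poly_eval big_flatten big_map big1 // => s _.
  move: (wfP s); case: (P s) => [|p r]; first by rewrite big_nil.
  by move=> /= /andP [/eqP h _]; exfalso; move: (leaves_pos p.2); rewrite h n0.
pose i0 : 'I_n := Ordinal npos.
apply: (beta_zero charF0 bL bR bB i0 (d := \max_(q <- pseudo_poly_eval prod N P a) msize q.1)) => //.
move=> m; exact: (Sfun_zero charF0 Dlin prodL prodR prodN wfP hyp a m).
Qed.
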